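(* There exists a constant $k_1$ such that for every integer $m\ge1$ there exists an acyclic directed multigraph $D'_m$ with exactly $m$ arcs such that $\mathrm{mac}(D'_m)\le\frac m4+k_1m^{3/4}$.
   Context: A directed multigraph may have parallel arcs (but no loops); it is acyclic if it contains no directed cycle. For a directed multigraph, $\mathrm{mac}(D)$ is the maximum, over all partitions $(X,Y)$ of the vertex set, of the number of arcs (counted with multiplicity) going from $X$ to $Y$. *)

(* Defs.v *)
From mathcomp Require Import all_boot.
Set Implicit Arguments. Unset Strict Implicit. Unset Printing Implicit Defensive.

(* A directed multigraph on vertex set 'I_n : w i j = number of parallel arcs i -> j. *)
Definition multidigraph (n : nat) := 'I_n -> 'I_n -> nat.

Definition loopless n (w : multidigraph n) : Prop := forall i, w i i = 0.

Definition arc_rel n (w : multidigraph n) : rel 'I_n := fun i j => 0 < w i j.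

Definition acyclic n (w : multidigraph n) : Prop :=
  forall (x : 'I_n) (p : seq 'I_n),
    path (arc_rel w) x p -> p != [::] -> last x p != x.

Definition num_arcs n (w : multidigraph n) : nat := \sum_(i : 'I_n) \sum_(j : 'I_n) w i j.

Definition cut_arcs n (w : multidigraph n) (X : {set 'I_n}) : nat :=
  \sum_(i in X) \sum_(j in ~: X) w i j.

Definition mac n (w : multidigraph n) : nat := \max_(X : {set 'I_n}) cut_arcs w X.

(* Main.v *)
Require Import Defs.
From mathcomp Require Import all_boot zify.
From Stdlib Require Import Reals Lra.
Set Implicit Arguments. Unset Strict Implicit. Unset Printing Implicit Defensive.

(* Construction: vertices 0..n-1, arc i -> j with multiplicity (i + K - j)_+ for i < j
   (union of transitive tournaments on sliding windows of size K), plus r extra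
   parallel arcs 0 -> 1.  Window sums show the symmetric part is PSD-like. *)

Definition base (K i j : nat) : nat := if i < j then i + K - j else 0.
Definition H (K N : nat) : nat := \sum_(t < N) (K - 1 - t).
Definition G (K : nat) := H K K.

Lemma H_rec K N : H K N.+1 = H K N + (K - 1 - N).
Proof. by rewrite /H big_ord_recr. Qed.

Lemma H_mono K N M : N <= M -> H K N <= H K M.
Proof.
elim: M => [|M IH]; first by rewrite leqn0 => /eqP ->.
rewrite leq_eqVlt => /orP [/eqP -> //|hNM].
rewrite H_rec; apply: leq_trans (IH hNM) _; exact: leq_addr.
Qed.

Lemma H_const K N : K <= N -> H K N = G K.
Proof.
elim: N => [|N IH]; first by rewrite leqn0 => /eqP ->.
rewrite leq_eqVlt => /orP [/eqP -> //|hKN].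
rewrite H_rec IH //; lia.
Qed.

Lemma H_le_G K N : H K N <= G K.
Proof.
case: (leqP N K) => h; first exact: H_mono.
by rewrite H_const // ltnW.
Qed.

Lemma G_rec K : G K.+1 = K + G K.
Proof.
rewrite /G /H big_ord_recl /=; congr (_ + _); first lia.
apply: eq_bigr => i _; rewrite /bump /=; lia.
Qed.

Lemma G2 K : 2 * G K = K * (K - 1).
Proof.
elim: K => [|K IH]; first by rewrite /G /H big_ord0.
rewrite G_rec mulnDr IH; nia.
Qed.

Lemma out_eq K i N : \sum_(j < N) base K i j = H K (N - i.+1).
Proof.
elim: N => [|N IH]; first by rewrite big_ord0 /H sub0n big_ord0.
rewrite big_ord_recr /= IH /base.
case: (ltnP i N) => h.
  have -> : N.+1 - i.+1 = (N - i.+1).+1 by lia.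
  rewrite H_rec; congr (_ + _); lia.
have -> : N.+1 - i.+1 = N - i.+1 by lia.
by rewrite addn0.
Qed.

Definition Iin (K i : nat) := \sum_(j < i) (j + K - i).

Lemma I_H K i : Iin K i = H K i.
Proof.
elim: i => [|i IH]; first by rewrite /Iin /H !big_ord0.
rewrite /Iin big_ord_recl H_rec -IH /Iin addnC. congr (_ + _); last by rewrite /=; lia.
Qed.

Lemma in_eq K i N : i <= N -> \sum_(j < N) base K j i = H K i.
Proof.
rewrite -I_H.
elim: N => [|N IH]; first by rewrite leqn0 => /eqP ->; rewrite !big_ord0 /Iin big_ord0.
rewrite leq_eqVlt => /orP [/eqP ->|hiN].
  rewrite /Iin; apply: eq_bigr => j _; by rewrite /base ltn_ord.
rewrite big_ord_recr /= IH // /base.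
by rewrite ltnNge -ltnS hiN addn0.
Qed.

Definition m0 K n := \sum_(i < n) \sum_(j < n) base K i j.

Lemma m0_rec K n : m0 K n.+1 = m0 K n + H K n.
Proof.
rewrite /m0 big_ord_recr /=.
rewrite [X in _ + X = _]big1; last first.
  by move=> j _; rewrite /base ltnNge -ltnS ltn_ord.
rewrite addn0.
rewrite (eq_bigr (fun i : 'I_n => \sum_(j < n) base K i j + base K i n)); last first.
  by move=> i _; rewrite big_ord_recr.
by rewrite big_split /= in_eq.
Qed.

Lemma m0_H K n : m0 K n = \sum_(i < n) H K i.
Proof.
elim: n => [|n IH]; first by rewrite /m0 !big_ord0.
by rewrite m0_rec IH big_ord_recr.
Qed.

Lemma m0_lower K n : (n - K) * G K <= m0 K n.
Proof.
elim: n => [|n IH]; first by rewrite sub0n.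
rewrite m0_rec.
case: (leqP K n) => h.
  rewrite H_const //; have -> : n.+1 - K = (n - K).+1 by lia.
  rewrite mulSn addnC; exact: leq_add.
have -> : n.+1 - K = 0 by lia.
by [].
Qed.

Lemma count_int a b N : \sum_(s < N) ((a <= s) && (s < b)) = minn b N - a.
Proof.
elim: N => [|N IH]; first by rewrite big_ord0; lia.
rewrite big_ord_recr /= IH.
case: (leqP a N) => h1; case: (ltnP N b) => h2 /=; lia.
Qed.

Definition win K (s i : nat) := (i <= s) && (s < i + K).

Lemma base_win K n (i j : 'I_n) :
  base K i j = (i < j) * \sum_(s < n + K) (win K s i && win K s j).
Proof.
rewrite /base; case: (ltnP i j) => hij; last by rewrite mul0n.
rewrite mul1n.
rewrite (eq_bigr (fun s : 'I_(n+K) => nat_of_bool ((j <= s) && (s < i + K)))); last first.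
  move=> s _; rewrite /win.
  case: (leqP i s); case: (leqP j s); case: (ltnP s (i+K)); case: (ltnP s (j+K));
    move=> *; rewrite /=; (try by []); lia.
rewrite count_int.
have := ltn_ord i; have := ltn_ord j; lia.
Qed.

Lemma sum_prod n (u v : 'I_n -> nat) :
  \sum_(i < n) \sum_(j < n) u i * v j = (\sum_(i < n) u i) * (\sum_(j < n) v j).
Proof. rewrite big_distrl; apply: eq_bigr => i _; by rewrite big_distrr. Qed.

Lemma sym_split n (g : 'I_n -> 'I_n -> nat) : (forall i j, g i j = g j i) ->
  \sum_(i < n) \sum_(j < n) g i j =
  2 * (\sum_(i < n) \sum_(j < n) (i < j) * g i j) + \sum_(i < n) g i i.
Proof.
move=> gs.
rewrite (eq_bigr (fun i : 'I_n => \sum_(j < n) ((i < j) * g i j + (j < i) * g i j + (i == j) * g i j))); last first.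
  move=> i _; apply: eq_bigr => j _.
  rewrite -(inj_eq val_inj) /=.
  by case: (ltngtP i j) => h; rewrite ?mul1n ?mul0n ?addn0 ?add0n.
rewrite (eq_bigr (fun i : 'I_n => \sum_(j < n) ((i < j) * g i j + (j < i) * g i j) + \sum_(j < n) (i == j) * g i j)); last first.
  by move=> i _; rewrite big_split.
rewrite big_split /=.
rewrite (eq_bigr (fun i : 'I_n => \sum_(j < n) (i < j) * g i j + \sum_(j < n) (j < i) * g i j)); last first.
  by move=> i _; rewrite big_split.
rewrite big_split /= [X in _ + X + _]exchange_big /=.
have -> : \sum_(i < n) \sum_(j < n) (i < j) * g j i = \sum_(i < n) \sum_(j < n) (i < j) * g i j.
  by apply: eq_bigr => i _; apply: eq_bigr => j _; rewrite gs.
congr (_ + _); first by rewrite mul2n addnn.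
apply: eq_bigr => i _.
rewrite (bigD1 i) //= eqxx mul1n big1 ?addn0 // => j /negbTE.
by rewrite eq_sym => ->.
Qed.

Lemma decomp K n (c : 'I_n -> 'I_n -> nat) :
  \sum_(i < n) \sum_(j < n) base K i j * c i j =
  \sum_(s < n + K) \sum_(i < n) \sum_(j < n) (i < j) * ((win K s i && win K s j) * c i j).
Proof.
rewrite [RHS]exchange_big /=.
apply: eq_bigr => i _.
rewrite [RHS]exchange_big /=.
apply: eq_bigr => j _.
rewrite base_win big_distrr big_distrl /=.
by apply: eq_bigr => s _; rewrite mulnA.
Qed.

Lemma window_ineq n (ws x : 'I_n -> bool) :
  4 * (\sum_(i < n) \sum_(j < n) (i < j) * ((ws i && ws j) * (x i != x j)))
  <= 2 * (\sum_(i < n) \sum_(j < n) (i < j) * ((ws i && ws j) * 1)) + \sum_(i < n) ws i.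
Proof.
set D := \sum_(i < n) _; set P := \sum_(i < n) _.
have hD := @sym_split n (fun i j => (ws i && ws j) * (x i != x j))
  ltac:(by move=> i j /=; rewrite andbC eq_sym).
have hP := @sym_split n (fun i j => (ws i && ws j) * 1)
  ltac:(by move=> i j /=; rewrite andbC).
have z : \sum_(i < n) (ws i && ws i) * (x i != x i) = 0.
  by apply: big1 => i _; rewrite eqxx muln0.
rewrite /= z addn0 in hD.
rewrite -/D in hD; rewrite -/P in hP.
set a := \sum_(i < n) (ws i && x i : nat).
set b := \sum_(i < n) (ws i && ~~ x i : nat).
have hL : \sum_(i < n) (ws i : nat) = a + b.
  rewrite /a /b -big_split; apply: eq_bigr => i _; by case: (ws i); case: (x i).
have e1 : \sum_(i < n) \sum_(j < n) (ws i && ws j) * (x i != x j) = a * b + b * a.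
  rewrite -!sum_prod -big_split; apply: eq_bigr => i _; rewrite -big_split; apply: eq_bigr => j _.
  by case: (ws i); case: (ws j); case: (x i); case: (x j).
have e2 : \sum_(i < n) \sum_(j < n) (ws i && ws j) * 1 = (a + b) * (a + b).
  rewrite -hL -sum_prod; apply: eq_bigr => i _; apply: eq_bigr => j _.
  by case: (ws i); case: (ws j).
have e3 : \sum_(i < n) (ws i && ws i) * 1 = a + b.
  rewrite -hL; apply: eq_bigr => i _; by case: (ws i).
rewrite hL.
have h1 : 2 * D = 2 * (a * b) by rewrite -hD e1; lia.
have h2 : 2 * P + (a + b) = (a + b) * (a + b) by rewrite -e2 hP e3.
have h3 : 4 * (a * b) <= (a + b) * (a + b).
  case: (leqP a b) => hab.
    have := leq_mul (leqnn (b - a)) (leqnn (b - a)); nia.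
  have := leq_mul (leqnn (a - b)) (leqnn (a - b)); nia.
lia.
Qed.

Lemma sumL K n : \sum_(s < n + K) \sum_(i < n) (win K s i : nat) = n * K.
Proof.
rewrite exchange_big /=.
rewrite (eq_bigr (fun _ => K)); first by rewrite sum_nat_const card_ord.
move=> i _; rewrite /win count_int; have := ltn_ord i; lia.
Qed.

Lemma quad K n (x : 'I_n -> bool) :
  4 * (\sum_(i < n) \sum_(j < n) base K i j * (x i != x j))
  <= 2 * (\sum_(i < n) \sum_(j < n) base K i j) + n * K.
Proof.
have -> : \sum_(i < n) \sum_(j < n) base K i j = \sum_(i < n) \sum_(j < n) base K i j * 1.
  by apply: eq_bigr => i _; apply: eq_bigr => j _; rewrite muln1.
rewrite !decomp -(sumL K n) !big_distrr -big_split /=.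
apply: leq_sum => s _.
exact: (window_ineq (fun i => win K s i) x).
Qed.

Lemma cut_identity K n (x : 'I_n -> bool) :
  2 * (\sum_(i < n) \sum_(j < n) base K i j * (x i && ~~ x j))
  + \sum_(i < n) \sum_(j < n) base K i j * x j
  = \sum_(i < n) \sum_(j < n) base K i j * (x i != x j)
  + \sum_(i < n) \sum_(j < n) base K i j * x i.
Proof.
rewrite big_distrr -!big_split; apply: eq_bigr => i _.
rewrite big_distrr -!big_split; apply: eq_bigr => j _.
by case: (x i); case: (x j); rewrite /= ?muln0 ?muln1 ?addn0 ?add0n // addnn mul2n.
Qed.

Lemma lin K n (x : 'I_n -> bool) :
  \sum_(i < n) \sum_(j < n) base K i j * x i
  <= \sum_(i < n) \sum_(j < n) base K i j * x j + K * G K.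
Proof.
have -> : \sum_(i < n) \sum_(j < n) base K i j * x j = \sum_(i < n) x i * H K i.
  rewrite exchange_big /=; apply: eq_bigr => j _.
  rewrite -big_distrl /= in_eq; [exact: mulnC | exact: ltnW].
have -> : \sum_(i < n) \sum_(j < n) base K i j * x i = \sum_(i < n) x i * H K (n - i.+1).
  by apply: eq_bigr => i _; rewrite -big_distrl /= out_eq mulnC.
have hc : \sum_(i < n) (i < K) * G K <= K * G K.
  rewrite -big_distrl /= leq_mul2r; apply/orP; right.
  rewrite (eq_bigr (fun i : 'I_n => nat_of_bool ((0 <= i) && (i < K)))) //.
  rewrite count_int; lia.
apply: leq_trans (leq_add (leqnn _) hc); rewrite -big_split /=.
apply: leq_sum => i _.
case: (x i); rewrite ?mul0n ?mul1n //.
have := H_le_G K (n - i.+1).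
case: (ltnP i K) => h; rewrite ?mul1n ?mul0n.
  lia.
rewrite [H K i]H_const //; lia.
Qed.

Lemma cut_bound K n (x : 'I_n -> bool) :
  8 * (\sum_(i < n) \sum_(j < n) base K i j * (x i && ~~ x j))
  <= 2 * m0 K n + n * K + 4 * (K * G K).
Proof.
have h1 := cut_identity K x.
have h2 := lin K x.
have h3 := quad K x.
rewrite /m0; lia.
Qed.

Definition wG K r n : multidigraph n :=
  fun i j => base K i j + ((nat_of_ord i == 0) && (nat_of_ord j == 1)) * r.
Arguments wG K r n : clear implicits.

Lemma wG_loopless K r n : loopless (wG K r n).
Proof.
move=> i; rewrite /wG /base ltnn add0n.
by case: (nat_of_ord i == 0) / eqP => [->|].
Qed.

Lemma wG_arc K r n (i j : 'I_n) : arc_rel (wG K r n) i j -> i < j.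
Proof.
rewrite /arc_rel /wG /base.
case: (ltnP i j) => // hji.
case/boolP: ((nat_of_ord i == 0) && (nat_of_ord j == 1)) => [/andP [/eqP hi /eqP hj]|_].
  by rewrite hi hj in hji.
by rewrite mul0n.
Qed.

Lemma path_last K r n (x : 'I_n) p : path (arc_rel (wG K r n)) x p -> p != [::] -> x < last x p.
Proof.
elim: p x => [|y p IH] x //= /andP [hxy hp] _.
have lt1 := wG_arc hxy.
case: p IH hp => [|z p] IH hp //=.
have := IH y hp isT => /= h; exact: ltn_trans h.
Qed.

Lemma wG_acyclic K r n : acyclic (wG K r n).
Proof.
move=> x p hp hn; have := path_last hp hn.
by rewrite neq_ltn => ->; rewrite orbT.
Qed.

Lemma sum_ind n c f : \sum_(j < n) (nat_of_ord j == c) * f = (c < n) * f.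
Proof.
elim: n => [|n IH]; first by rewrite big_ord0.
rewrite big_ord_recr /= IH ltnS [c <= n]leq_eqVlt eq_sym.
by case: eqP => [->|_]; rewrite ?ltnn /= ?mul0n ?addn0 ?add0n ?mul1n.
Qed.

Lemma wG_arcs K r n : 1 < n -> num_arcs (wG K r n) = m0 K n + r.
Proof.
move=> hn; rewrite /num_arcs /wG /m0.
rewrite (eq_bigr (fun i : 'I_n => \sum_(j < n) base K i j + (nat_of_ord i == 0) * ((1 < n) * r))); last first.
  move=> i _; rewrite big_split /=; congr (_ + _).
  rewrite -(sum_ind n 1 r) big_distrr /=.
  by apply: eq_bigr => j _; case: (_ == 0); case: (_ == 1); rewrite ?mul0n ?mul1n.
rewrite big_split /= sum_ind hn (ltn_trans _ hn) //.
by rewrite !mul1n.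
Qed.

Lemma cut_eq n (w : multidigraph n) (X : {set 'I_n}) :
  cut_arcs w X = \sum_(i < n) \sum_(j < n) w i j * ((i \in X) && ~~ (j \in X)).
Proof.
rewrite /cut_arcs big_mkcond; apply: eq_bigr => i _.
case: (i \in X) => /=.
  rewrite big_mkcond; apply: eq_bigr => j _.
  by rewrite in_setC; case: (j \in X); rewrite /= ?muln1 ?muln0.
by rewrite big1 // => j _; rewrite muln0.
Qed.

Lemma wG_cut K r n (X : {set 'I_n}) : 1 < n ->
  8 * cut_arcs (wG K r n) X <= 2 * m0 K n + n * K + 4 * (K * G K) + 8 * r.
Proof.
move=> hn.
rewrite cut_eq.
have hb := cut_bound K (fun i => i \in X).
have he : \sum_(i < n) \sum_(j < n) ((nat_of_ord i == 0) && (nat_of_ord j == 1)) * r * ((i \in X) && ~~ (j \in X)) <= r.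
  have ex : \sum_(i < n) \sum_(j < n) ((nat_of_ord i == 0) && (nat_of_ord j == 1)) * r = r.
    rewrite (eq_bigr (fun i : 'I_n => (nat_of_ord i == 0) * ((1 < n) * r))).
      by rewrite sum_ind hn (ltn_trans _ hn) // !mul1n.
    move=> i _; rewrite -(sum_ind n 1 r) big_distrr /=.
    by apply: eq_bigr => j _; case: (_ == 0); case: (_ == 1); rewrite ?mul0n ?mul1n.
  rewrite -{2}ex; apply: leq_sum => i _; apply: leq_sum => j _.
  by rewrite -[X in _ <= X]muln1 leq_mul2l leq_b1 orbT.
rewrite /wG.
rewrite (eq_bigr (fun i : 'I_n => \sum_(j < n) base K i j * ((i \in X) && ~~ (j \in X)) + \sum_(j < n) ((nat_of_ord i == 0) && (nat_of_ord j == 1)) * r * ((i \in X) && ~~ (j \in X)))); last first.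
  by move=> i _; rewrite -big_split; apply: eq_bigr => j _; rewrite mulnDl.
rewrite big_split mulnDr /=.
apply: leq_add; first exact: hb.
by rewrite leq_mul2l he orbT.
Qed.

Lemma mac_le n (w : multidigraph n) c : (forall X, 8 * cut_arcs w X <= c) -> 8 * mac w <= c.
Proof.
move=> hX.
have : mac w <= c %/ 8.
  apply/bigmax_leqP => X _; rewrite leq_divRL // mulnC; exact: hX.
by rewrite leq_divRL // mulnC.
Qed.

Lemma cross (f : nat -> nat) m a N : a <= N -> f a <= m -> m < f N ->
  exists n, a <= n /\ f n <= m /\ m < f n.+1.
Proof.
elim: N => [|N IH].
  by rewrite leqn0 => /eqP -> h1 h2; move: (leq_ltn_trans h1 h2); rewrite ltnn.
rewrite leq_eqVlt => /orP [/eqP -> h1 h2|].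
  by move: (leq_ltn_trans h1 h2); rewrite ltnn.
rewrite ltnS => haN h1 h2.
case: (leqP (f N) m) => h3.
  by exists N.
exact: IH.
Qed.

Lemma m0_2 K : m0 K 2 = K - 1.
Proof. rewrite !m0_rec /m0 /H !big_ord0 big_ord1 /=; lia. Qed.


Lemma a1 k : 1 <= k -> (k+1)*(k+1)*(k+1) <= 8*(k*k*k).
Proof. move=> h. nia. Qed.

Lemma a2 k d : 1 <= k -> d < 16*(k*k) -> (d + (k+1)) * (k+1) <= 36 * (k*k*k).
Proof. move=> h1 h2. nia. Qed.

Lemma a3 k : 1 <= k -> 2 * ((k+1)*(k+1)*k) <= 8*(k*k*k).
Proof. move=> h; nia. Qed.

Lemma a4 k : 1 <= k -> 3 * ((k+1)*k) <= 6*(k*k*k).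
Proof. move=> h; nia. Qed.

Lemma arith k n m G r m0 : 1 <= k -> m < expn k.+1 4 ->
  2 * G = k.+1 * k -> (n - k.+1) * G <= m -> r < G -> m = m0 + r ->
  2 * m0 + n * k.+1 + 4 * (k.+1 * G) + 8 * r <= 2 * m + 64 * expn k 3.
Proof.
rewrite -(addn1 k) !expnS expn0 !muln1 !mulnA.
move=> hk hm hG hd hr hmr.
set K := k + 1 in hm hG hd *.
set d := n - K in hd.
have h2 : K * (d * k) <= 2 * m.
  have -> : K * (d * k) = d * (K * k) by rewrite mulnCA mulnA.
  by rewrite -hG mulnCA; lia.
have h4 : d * k < 2 * (K * K * K).
  have : K * (d * k) < K * (2 * (K * K * K)).
    apply: leq_ltn_trans h2 _.
    have -> : K * (2 * (K * K * K)) = 2 * (K * K * K * K) by rewrite mulnCA !mulnA.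
    lia.
  by rewrite ltn_mul2l => /andP [].
have h5 := @a1 k hk; rewrite -/K in h5.
have h6 : d < 16 * (k * k).
  have : k * d < k * (16 * (k * k)).
    have -> : k * (16 * (k * k)) = 16 * (k * k * k) by rewrite mulnCA !mulnA.
    rewrite mulnC; lia.
  by rewrite ltn_mul2l => /andP [].
have h7 := @a2 k d hk h6; rewrite -/K in h7.
have h8 : n * K <= (d + K) * K by rewrite leq_mul2r /d; apply/orP; right; lia.
have h9 := @a3 k hk; rewrite -/K in h9.
have h10 : 4 * (K * G) = 2 * (K * K * k).
  by rewrite -mulnA -hG mulnCA; lia.
have h11 := @a4 k hk; rewrite -/K in h11.
have h12 : 6 * r <= 3 * (K * k) by rewrite -hG; lia.
lia.
Qed.

Lemma nat_main m : 1 <= m -> exists k n r, 1 <= k /\ expn k 4 <= m /\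
  num_arcs (wG k.+1 r n) = m /\ 8 * mac (wG k.+1 r n) <= 2 * m + 64 * expn k 3.
Proof.
move=> hm.
have [k [hk1 [hk hk']]] : exists k, 1 <= k /\ expn k 4 <= m /\ m < expn k.+1 4.
  apply: (@cross (fun k => expn k 4) m 1 m.+1) => //.
  have : m.+1 <= expn m.+1 4 by rewrite -{1}(expn1 m.+1) leq_pexp2l.
  by [].
set K := k.+1.
have hG2 : 2 * G K = K * k by rewrite G2 /K subn1.
have hGpos : 1 <= G K.
  have : 2 <= K * k by rewrite /K; nia.
  lia.
have [n [hn2 [hn hn']]] : exists n, 2 <= n /\ m0 K n <= m /\ m < m0 K n.+1.
  apply: (@cross (fun n => m0 K n) m 2 (m + K + 2)).
  - lia.
  - rewrite /= m0_2 /K; have : k <= expn k 4 by rewrite -{1}(expn1 k) leq_pexp2l.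
    lia.
  - have := m0_lower K (m + K + 2); rewrite /=.
    have : m + 2 <= (m + K + 2 - K) * G K by rewrite addnAC addnK; nia.
    lia.
set r := m - m0 K n.
have hr : r < G K.
  rewrite m0_rec in hn'; have := H_le_G K n; rewrite /r; lia.
exists k, n, r; split => //; split => //; split.
  by rewrite wG_arcs // /r -/K; lia.
apply: mac_le => X.
apply: leq_trans (wG_cut K r X hn2) _.
have hlow := m0_lower K n.
apply: (@arith k n m (G K) r (m0 K n)) => //.
  exact: leq_trans hlow hn.
by rewrite /r; lia.
Qed.

Theorem mainTheorem10 :
  exists k1 : R, forall m : nat, (1 <= m)%N ->
    exists (n : nat) (w : multidigraph n),
      loopless w /\ acyclic w /\ num_arcs w = m /\
      (INR (mac w) <= INR m / 4 + k1 * Rpower (INR m) (3 / 4))%R.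
Proof.
exists 8%R => m hm.
have [k [n [r [hk1 [hk4 [harc hmac]]]]]] := nat_main hm.
exists n, (wG k.+1 r n).
split; first exact: wG_loopless.
split; first exact: wG_acyclic.
split; first exact: harc.
have e3 : expn k 3 = (k * k * k)%N by rewrite !expnS expn0 muln1 mulnA.
have e4 : expn k 4 = (k * k * k * k)%N by rewrite !expnS expn0 muln1 !mulnA.
rewrite e3 in hmac; rewrite e4 in hk4.
have hR : (8 * INR (mac (wG k.+1 r n)) <= 2 * INR m + 64 * (INR k * INR k * INR k))%R.
  have := le_INR _ _ (elimT leP hmac).
  rewrite !mult_INR plus_INR !mult_INR.
  by simpl INR; lra.
have kpos : (0 < INR k)%R by apply: lt_0_INR; apply/ltP.
have m4 : (INR k ^ 4 <= INR m)%R.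
  have := le_INR _ _ (elimT leP hk4); rewrite !mult_INR; simpl pow; lra.
have hk3 : (INR k * INR k * INR k <= Rpower (INR m) (3 / 4))%R.
  have h1 : (Rpower (INR k ^ 4) (3/4) <= Rpower (INR m) (3 / 4))%R.
    apply: Rle_Rpower_l; first lra.
    split => //; apply: pow_lt.
    exact: kpos.
  have h2 : Rpower (INR k ^ 4) (3/4) = (INR k * INR k * INR k)%R.
    rewrite -(@Rpower_pow 4 (INR k) kpos) Rpower_mult.
    replace (INR 4 * (3 / 4))%R with (INR 3) by (simpl; lra).
    rewrite (@Rpower_pow 3 (INR k) kpos); simpl; ring.
  lra.
lra.
Qed.
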